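(* Let $\mathcal{I}=\{(i\mid A_i): i\in[m]\}$ be an index coding instance. Then $$\beta(\mathcal{I})\le \beta_{\text{P-UMCD}}(\mathcal{I}):=\min\sum_{j\in[n]}\beta_{\text{UMCD}}(M_j),$$ where the minimum is over all partitions of $[m]$ into pairwise disjoint nonempty sets $M_1,\dots,M_n$ ($n\le m$) with $M_1\cup\dots\cup M_n=[m]$.
   Context: Index coding: a server holds messages $x_i=(x_i^1,\dots,x_i^t)\in\mathbb{F}_q^t$, $i\in[m]$; receiver $i$ wants $x_i$ and knows $\{x_j: j\in A_i\}$ where $A_i\subseteq[m]\setminus\{i\}$. A $(t,r)$ index code consists of an encoding map $\phi:\mathbb{F}_q^{mt}\to\mathbb{F}_q^{r}$ and decoders $\psi_i:\mathbb{F}_q^r\times\mathbb{F}_q^{|A_i|t}\to\mathbb{F}_q^t$ with $\psi_i(\phi(x),(x_j)_{j\in A_i})=x_i$ for all messages and all $i$; its rate is $r/t$, and $\beta(\mathcal{I})$ is the infimum of $r/t$ over all $t$ and all $(t,r)$ index codes (over finite fields). For $M\subseteq[m]$, the subinstance $M$ is the instance with receiver set $M$ and side information $A_i\cap M$. $B_i=[m]\setminus(A_i\cup\{i\})$ (within a subinstance, relative to $M$). For a $0/1$ matrix $\boldsymbol{G}$, $\boldsymbol{G}_{[k]}^L$ is the submatrix of its first $k$ rows and columns in $L$; $\mathrm{mcm}(\boldsymbol{G})$ is the maximum number of $1$-entries no two in a common row or column (0 if no columns). UMCD algorithm on an instance: $N=$ all receivers, $k=0$; while $N\ne\emptyset$: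 $k\leftarrow k+1$; pick $w\in N$ minimizing $|A_w|$ over $N$ (arbitrary tie-breaking); set row $k$ of $\boldsymbol{G}$ to the indicator of $\{w\}\cup A_w$; remove $w$ from $N$; remove every $i\in N$ with $\mathrm{mcm}(\boldsymbol{G}_{[k]}^{\{i\}\cup B_i})=\mathrm{mcm}(\boldsymbol{G}_{[k]}^{B_i})+1$; output $\beta_{\text{UMCD}}=k$. $\beta_{\text{UMCD}}(M)$ is the output of (a fixed execution of) this algorithm on subinstance $M$. *)

(* Defs.v *)
From HB Require Import structures.
From mathcomp Require Import all_boot all_order all_algebra.
From mathcomp Require Import classical_sets reals.
Unset Strict Implicit. Unset Printing Implicit Defensive.
Import Order.TTheory GRing.Theory Num.Theory.

Section IndexCoding.
Variable m : nat.
(* An index coding instance: receiver i wants x_i and knows {x_j : j \in A i}. *)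
Variable A : 'I_m -> {set 'I_m}.

Definition has_index_code (F : finFieldType) (t r : nat) : Prop :=
  exists (phi : ('I_m -> 'rV[F]_t) -> 'rV[F]_r)
         (psi : forall i : 'I_m,
                  'rV[F]_r -> ({j : 'I_m | j \in A i} -> 'rV[F]_t) -> 'rV[F]_t),
    forall (x : 'I_m -> 'rV[F]_t) (i : 'I_m),
      psi i (phi x) (fun j => x (val j)) = x i.

Definition beta (R : realType) : R :=
  inf [set x : R | exists (F : finFieldType) (t r : nat),
        [/\ (0 < t)%N, has_index_code F t r & x = (r%:R / t%:R)%R]].

Definition Bset (M : {set 'I_m}) (i : 'I_m) : {set 'I_m} :=
  M :\: (i |: A i).

(* Row j of G (for the run s = picked receivers w_1 .. w_k): the indicator
   of {w_j} u (A_{w_j} n M), as a set of columns. *)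
Definition Grow (M : {set 'I_m}) (s : seq 'I_m) (j : 'I_(size s)) : {set 'I_m} :=
  let w := tnth (in_tuple s) j in w |: (A w :&: M).

Definition is_mcm_set (M : {set 'I_m}) (s : seq 'I_m) (L : {set 'I_m})
    (S : {set 'I_(size s) * 'I_m}) : bool :=
  [forall p in S, (p.2 \in L) && (p.2 \in @Grow M s p.1)] &&
  [forall p in S, forall q in S, (p != q) ==> (p.1 != q.1) && (p.2 != q.2)].

Definition mcm (M : {set 'I_m}) (s : seq 'I_m) (L : {set 'I_m}) : nat :=
  \max_(S : {set 'I_(size s) * 'I_m} | is_mcm_set M s L S) #|S|.

(* Receivers removed after adding the row of w (s already contains w). *)
Definition umcd_remaining (M N : {set 'I_m}) (s : seq 'I_m) (w : 'I_m)
  : {set 'I_m} :=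
  [set i in N :\ w | mcm M s (i |: Bset M i) != (mcm M s (Bset M i)).+1].

(* umcd_from M N s k : from state (N, rows s) some execution of the
   algorithm (arbitrary tie-breaking) terminates with output k. *)
Inductive umcd_from (M : {set 'I_m}) : {set 'I_m} -> seq 'I_m -> nat -> Prop :=
| umcd_done (s : seq 'I_m) : umcd_from M (finset.set0 : {set 'I_m}) s (size s)
| umcd_step (N : {set 'I_m}) (s : seq 'I_m) (w : 'I_m) (k : nat) :
    w \in N ->
    (forall v, v \in N -> #|A w :&: M| <= #|A v :&: M|)%N ->
    umcd_from M (umcd_remaining M N (rcons s w) w) (rcons s w) k ->
    umcd_from M N s k.

Definition umcd_run (M : {set 'I_m}) (k : nat) : Prop := umcd_from M M [::] k.

Definition singleton_partition : {set {set 'I_m}} := [set [set i] | i : 'I_m].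

Definition pumcd (exec : {set 'I_m} -> nat) : nat :=
  let P := [arg min_(P < singleton_partition | finset.partition P [set: 'I_m])
              (\sum_(M in P) exec M)%N] in
  (\sum_(M in P) exec M)%N.

End IndexCoding.

(* Main.v *)
Require Import Defs.
From HB Require Import structures.
From mathcomp Require Import all_boot all_order all_algebra.
From mathcomp Require Import classical_sets reals.
Import Order.TTheory GRing.Theory Num.Theory.
From mathcomp Require Import fingroup perm ring boolp.

Section P1_sec.

Lemma bin_lt (N : nat) (f : nat -> bool) : \sum_(i < N) f i * 2^i < 2^N.
Proof.
elim: N => [|N IH]; first by rewrite big_ord0.
rewrite big_ord_recr /= expnS mul2n -addnn.
apply: leq_trans (_ : 2^N + f N * 2^N <= _); first by rewrite ltn_add2r.
by rewrite leq_add2l; case: (f N); rewrite ?mul1n ?mul0n.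
Qed.

Lemma bin_uniq (N : nat) (f g : nat -> bool) :
  \sum_(i < N) f i * 2^i = \sum_(i < N) g i * 2^i -> forall i, i < N -> f i = g i.
Proof.
elim: N => [|N IH] //. rewrite !big_ord_recr /= => E.
have ef : f N = g N.
  have := bin_lt N f; have := bin_lt N g.
  move: E; case: (f N); case: (g N) => //=; rewrite ?mul1n ?mul0n ?addn0 => E.
    by move=> H _; move: H; rewrite -E ltnNge leq_addl.
  by move=> _ H; move: H; rewrite E ltnNge leq_addl.
move: E; rewrite ef => /addIn E i; rewrite ltnS leq_eqVlt => /orP [/eqP -> //|].
exact: IH.
Qed.

Lemma sum_uniq_iota (N : nat) (s : seq nat) (F : nat -> nat) :
  uniq s -> all (fun i => i < N) s ->
  \sum_(i <- s) F i = \sum_(i < N) ((i : nat) \in s) * F i.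
Proof.
move=> us als.
rewrite -(big_mkord xpredT (fun i : nat => (i \in s) * F i)).
transitivity (\sum_(0 <= i < N | i \in s) F i); last first.
  by rewrite big_mkcond /=; apply: eq_bigr => i _; case: (i \in s); rewrite ?mul1n ?mul0n.
rewrite /index_iota subn0 -[RHS]big_filter; apply: perm_big.
apply: uniq_perm => //; first by rewrite filter_uniq // iota_uniq.
move=> x; rewrite mem_filter mem_iota /= add0n; case xs: (x \in s) => //=.
by move/allP: als => /(_ x xs) ->.
Qed.

End P1_sec.

Section P2_sec.

Section Generic.
Local Open Scope ring_scope.
Variable F : finFieldType.
Variables k m : nat.
Variable P : 'I_k -> 'I_m -> bool.

Definition valid (S : {set 'I_k * 'I_m}) : bool :=
  [forall p in S, P p.1 p.2] &&
  [forall p in S, forall q in S, (p != q) ==> (p.1 != q.1) && (p.2 != q.2)].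

Definition Rof (S : {set 'I_k * 'I_m}) (j : 'I_#|S|) : 'I_k := (enum_val j).1.
Definition Cof (S : {set 'I_k * 'I_m}) (j : 'I_#|S|) : 'I_m := (enum_val j).2.
Definition code (p : 'I_k * 'I_m) : nat := enum_rank p.
Definition NN := #|{: 'I_k * 'I_m}|.

Definition minor {R : Type} (A : 'M[R]_(k, m)) (S : {set 'I_k * 'I_m}) : 'M[R]_#|S| :=
  \matrix_(a, b) A (Rof S a) (Cof S b).

Definition GX : 'M[{poly F}]_(k, m) :=
  \matrix_(r, c) if P r c then 'X^(2 ^ code (r, c)) else 0.
Definition GA (x : F) : 'M[F]_(k, m) :=
  \matrix_(r, c) if P r c then x ^+ (2 ^ code (r, c)) else 0.

Definition DS S := \det (minor GX S).

Lemma Rof_inj S : valid S -> injective (Rof S).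
Proof.
case/andP=> _ /forallP H a b E; apply: enum_val_inj; apply/eqP; apply/negPn/negP=> ne.
have := H (enum_val a); rewrite enum_valP /= => /forallP /(_ (enum_val b)).
by rewrite enum_valP ne /= -/(Rof S a) -/(Rof S b) E eqxx.
Qed.

Lemma Cof_inj S : valid S -> injective (Cof S).
Proof.
case/andP=> _ /forallP H a b E; apply: enum_val_inj; apply/eqP; apply/negPn/negP=> ne.
have := H (enum_val a); rewrite enum_valP /= => /forallP /(_ (enum_val b)).
by rewrite enum_valP ne /= -/(Cof S a) -/(Cof S b) E eqxx andbF.
Qed.

Lemma Rof_P S : valid S -> forall a, P (Rof S a) (Cof S a).
Proof.
by case/andP=> /forallP H _ a; have := H (enum_val a); rewrite enum_valP.
Qed.

Definition wt (S : {set 'I_k * 'I_m}) (s : 'S_(#|S|)) : nat := (\sum_a 2 ^ code (Rof S a, Cof S (s a)))%N.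
Definition allPt (S : {set 'I_k * 'I_m}) (s : 'S_(#|S|)) : bool := [forall a, P (Rof S a) (Cof S (s a))].

Lemma DS_coef S n : (DS S)`_n =
  \sum_(s : 'S_(#|S|)) (allPt S s && (wt S s == n))%:R * (-1) ^+ s.
Proof.
rewrite /DS /determinant coef_sum; apply: eq_bigr => s _.
have -> : \prod_i minor GX S i (s i) =
   if allPt S s then 'X^(wt S s) else 0.
  case: ifP => [/forallP H|/negbT].
    rewrite /wt -prodrXr; apply: eq_bigr => a _; by rewrite !mxE H.
  rewrite negb_forall => /existsP [a Ha].
  by rewrite (bigD1 a) //= !mxE (negbTE Ha) mul0r.
case: (odd_perm s); rewrite ?expr0 ?expr1 ?mul1r ?mulN1r ?mulrN1 ?mulr1 ?coefN;
  case: (allPt S s); rewrite ?coef0 ?oppr0 //= ?coefXn ?coefN ?coefXn eq_sym //.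
Qed.

Lemma wt_inj (S : {set 'I_k * 'I_m}) (s : 'S_(#|S|)) : valid S -> wt S s = wt S 1%g -> s = 1%g.
Proof.
move=> vS E.
pose f (t : 'S_(#|S|)) (a : 'I_#|S|) := code (Rof S a, Cof S (t a)).
have finj t : injective (f t).
  move=> a b /val_inj /enum_rank_inj [] /(Rof_inj S vS) -> _ //.
have fle t a : (f t a < NN)%N by rewrite /f /code ltn_ord.
have key t : wt S t = (\sum_(i < NN) ((i : nat) \in map (f t) (enum 'I_#|S|)) * 2 ^ i)%N.
  rewrite -sum_uniq_iota.
  - by rewrite big_map big_enum.
  - by rewrite map_inj_uniq ?enum_uniq.
  - by apply/allP=> x /mapP [a _ ->].
have := @bin_uniq NN (fun i => i \in map (f s) (enum 'I_#|S|)) (fun i => i \in map (f 1%g) (enum 'I_#|S|)) (etrans (esym (key s)) (etrans E (key 1%g))) => H.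
apply/permP => a; rewrite perm1.
have : f s a \in map (f s) (enum 'I_#|S|) by rewrite map_f ?mem_enum.
rewrite H ?fle // => /mapP [b _] /val_inj /enum_rank_inj [] E1 E2.
move: E1 => /(Rof_inj S vS) ab; rewrite ab perm1 in E2.
by apply: (Cof_inj S vS); rewrite ab.
Qed.

Lemma DS_neq0 S : valid S -> DS S != 0.
Proof.
move=> vS; apply/eqP => E; have := congr1 (fun p : {poly F} => p`_(wt S 1%g)) E; rewrite /=.
rewrite DS_coef coef0 (bigD1 1%g) //= big1.
- have -> : allPt S 1%g by apply/forallP => a; rewrite perm1; apply: Rof_P.
  by rewrite eqxx odd_perm1 /= expr0 mulr1 addr0 => /eqP; rewrite oner_eq0.
- move=> s ns; case: (allPt S s); rewrite /= ?mul0r //.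
  case: (wt S s =P wt S 1%g) => [E'|_]; last by rewrite mul0r.
  by move: ns; rewrite (wt_inj S s vS E') eqxx.
Qed.

Lemma wt_le (S : {set 'I_k * 'I_m}) (s : 'S_(#|S|)) : (wt S s <= NN * 2 ^ NN)%N.
Proof.
rewrite /wt; apply: leq_trans (_ : \sum_(a < #|S|) 2 ^ NN <= _)%N.
  by apply: leq_sum => a _; rewrite leq_exp2l // ltnW // /code ltn_ord.
by rewrite sum_nat_const card_ord leq_mul2r max_card orbT.
Qed.

Lemma DS_size S : (size (DS S) <= (NN * 2 ^ NN).+1)%N.
Proof.
apply/leq_sizeP => j hj; rewrite DS_coef big1 // => s _.
have : (wt S s < j)%N by apply: leq_trans hj; rewrite ltnS wt_le.
by rewrite ltn_neqAle => /andP [/negbTE -> _]; rewrite andbF mul0r.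
Qed.

Lemma DS_eval S x : \det (minor (GA x) S) = (DS S).[x].
Proof.
rewrite /DS -[RHS]/(horner_eval x _) -det_map_mx; congr (\det _).
by apply/matrixP => a b; rewrite !mxE /=; case: (P _ _); rewrite /horner_eval ?hornerXn ?horner0.
Qed.

Definition Bound := (#|{: {set 'I_k * 'I_m}}| * (NN * 2 ^ NN).+1).+2.

Lemma generic : (Bound < #|F|)%N ->
  exists x : F, x != 0 /\ forall S, valid S -> \det (minor (GA x) S) != 0.
Proof.
move=> hF.
pose Q := 'X * \prod_(S | valid S) DS S.
have Q0 : Q != 0.
  rewrite mulf_neq0 ?polyX_eq0 // prodf_seq_neq0; apply/allP => S _.
  by apply/implyP => vS; exact: DS_neq0.
have sQ : (size Q <= Bound)%N.
  apply: leq_trans (size_mul_leq _ _) _; rewrite size_polyX /=.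
  apply: leq_trans (size_poly_prod_leq _ _) _.
  apply: leq_trans (leq_subr _ _) _; rewrite ltnS.
  apply: leq_trans (_ : \sum_(S | valid S) (NN * 2 ^ NN).+1 <= _)%N.
    by apply: leq_sum => S _; exact: DS_size.
  apply: leq_trans (_ : \sum_(S : {set 'I_k * 'I_m}) (NN * 2 ^ NN).+1 <= _)%N.
    by rewrite [X in (_ <= X)%N](bigID valid) /= leq_addr.
  by rewrite sum_nat_const.
case: (pickP (fun x => ~~ root Q x)) => [x Hx | H].
  rewrite /root /Q hornerM hornerX horner_prod mulf_eq0 negb_or in Hx.
  case/andP: Hx => x0 Hp; exists x; split => // S vS.
  rewrite DS_eval; move: Hp; rewrite prodf_seq_neq0 => /allP /(_ S).
  by rewrite mem_index_enum vS => /(_ isT).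
have := max_poly_roots Q0 (rs := enum F).
rewrite enum_uniq -cardE.
have -> : all (root Q) (enum F) by apply/allP => x _; move: (H x) => /= /negbFE.
move=> /(_ isT isT) h.
by move: (leq_trans h (leq_trans sQ (ltnW hF))); rewrite ltnn.
Qed.

End Generic.
End P2_sec.
Arguments valid {k m} P S.
Arguments Rof {k m} S j.
Arguments Cof {k m} S j.
Arguments minor {k m R} A S.
Arguments GA {F k m} P x.
Arguments generic {F k m} P _.
Arguments Rof_inj {k m P} S _ _ _.
Arguments Cof_inj {k m P} S _ _ _.
Arguments Rof_P {k m P} S _ _.


Section P3_sec.
Local Open Scope ring_scope.

Lemma enum_val_surj {T : finType} {S : {set T}} {p} : p \in S ->
  exists a : 'I_#|S|, enum_val a = p.
Proof. by move=> pS; exists (enum_rank_in pS p); rewrite enum_rankK_in. Qed.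

Section NoSpan.
Variable F : fieldType.
Variables k m : nat.
Variable P : 'I_k -> 'I_m -> bool.
Variable G : 'M[F]_(k, m).
Hypothesis Goff : forall r c, ~~ P r c -> G r c = 0.
Hypothesis Ggen : forall S, valid P S -> \det (minor G S) != 0.

Lemma nospan (Rw : pred 'I_k) (i : 'I_m) (B : {set 'I_m}) (mu : nat) :
  i \notin B ->
  (exists S, [/\ valid P S, #|S| = mu.+1 &
        forall p, p \in S -> Rw p.1 && (p.2 \in i |: B)]) ->
  (forall T, valid P T -> (forall p, p \in T -> Rw p.1 && (p.2 \in B)) ->
        (#|T| <= mu)%N) ->
  forall lam : 'I_m -> F, ~ (forall r, G r i = \sum_(b in B) lam b * G r b).
Proof.
move=> iB [S [vS cS hS]] hT lam hlam.
have hSa a : Rw (Rof S a) && (Cof S a \in i |: B) by apply: hS; exact: enum_valP.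
have [c0 Hc0] : exists c0, Cof S c0 = i.
  case: (pickP (fun c0 => Cof S c0 == i)) => [c0 /eqP|H]; first by eauto.
  suff : (#|S| <= mu)%N by move=> h; exfalso; move: h; rewrite cS ltnn.
  apply: (hT S vS) => p pS.
  have [a <-] := enum_val_surj pS.
  have Ha : (Cof S a == i) = false := H a.
  by have := hSa a; rewrite in_setU1 Ha.
pose Q := minor G S.
pose Qb b := \matrix_(a, c) if c == c0 then G (Rof S a) b else Q a c.
have cofE b a : cofactor (Qb b) a c0 = cofactor Q a c0.
  rewrite /cofactor; congr (_ * \det _); apply/matrixP => x y.
  by rewrite !mxE eq_sym (negbTE (neq_lift c0 y)).
have detQ : \det Q = \sum_(b in B) lam b * \det (Qb b).
  rewrite (expand_det_col Q c0).
  under eq_bigr => a _ do rewrite /Q mxE Hc0 hlam mulr_suml.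
  rewrite exchange_big /=; apply: eq_bigr => b _.
  rewrite (expand_det_col (Qb b) c0) mulr_sumr; apply: eq_bigr => a _.
  by rewrite cofE !mxE eqxx -mulrA.
have Qb0 b : b \in B -> \det (Qb b) = 0.
  move=> bB; apply/eqP; apply: contraT => nz.
  case: (pickP (fun c1 => Cof S c1 == b)) => [c1 /eqP Hc1 | Hnc].
    have c10 : c1 != c0.
      by apply/eqP=> E; move: iB; rewrite -Hc0 -E Hc1 bB.
    move: nz; rewrite -det_tr (determinant_alternate c10) ?eqxx //.
    by move=> a; rewrite !mxE eqxx (negbTE c10) Hc1.
  have [s Hs] : exists s : 'S_#|S|, \prod_a Qb b a (s a) != 0.
    case: (pickP (fun s : 'S_#|S| => \prod_a Qb b a (s a) != 0)) => [s Hs|H].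
      by exists s.
    move: nz; rewrite /determinant big1 ?eqxx // => s _.
    by move: (H s) => /= /negbFE /eqP ->; rewrite mulr0.
  pose col c := if c == c0 then b else Cof S c.
  have colinj : injective col.
    move=> x y; rewrite /col; case: (x =P c0) => [->|hx]; case: (y =P c0) => [->|hy] //.
    - by move=> E; have := Hnc y; rewrite /= -E eqxx.
    - by move=> E; have := Hnc x; rewrite /= E eqxx.
    - exact: (Cof_inj S vS).
  have QbE a c : Qb b a c = G (Rof S a) (col c).
    by rewrite !mxE /col; case: (c == c0) => //; rewrite mxE.
  pose T := [set (Rof S a, col (s a)) | a : 'I_#|S|].
  have fTinj : injective (fun a => (Rof S a, col (s a))).
    by move=> x y [/(Rof_inj S vS)].
  have cT : #|T| = #|S| by rewrite card_imset // card_ord.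
  suff : (#|T| <= mu)%N by rewrite cT cS ltnn.
  apply: hT.
    apply/andP; split.
      apply/forall_inP => p /imsetP [a _ ->] /=.
      apply/negPn/negP => nP; move: (Goff _ _ nP) => G0.
      by move/prodf_neq0: Hs => /(_ a isT); rewrite QbE G0 eqxx.
    apply/forall_inP => p /imsetP [a _ ->]; apply/forall_inP => q /imsetP [a' _ ->].
    apply/implyP => ne; have aa : a != a' by apply: contraNneq ne => ->.
    by rewrite /= (inj_eq (Rof_inj S vS)) (inj_eq colinj) (inj_eq (@perm_inj _ s)) aa.
  move=> p /imsetP [a _ ->] /=; have := hSa a; case/andP => -> _ /=.
  rewrite /col; case: eqP => // ne.
  have := hSa (s a); rewrite in_setU1 => /andP [_ /orP [/eqP E|//]].
  by exfalso; apply: ne; apply: (Cof_inj S vS); rewrite E Hc0.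
have := Ggen S vS; rewrite -/Q detQ big1 ?eqxx // => b bB.
by rewrite Qb0 // mulr0.
Qed.
End NoSpan.

End P3_sec.

Section P4_sec.

Section Umcd.
Variable m : nat.
Variable A : 'I_m -> {set 'I_m}.

Definition good (M : {set 'I_m}) (s : seq 'I_m) (i : 'I_m) : Prop :=
  (i \in s) \/ exists s0 t, s = s0 ++ t /\
     mcm m A M s0 (i |: Bset m A M i) = (mcm m A M s0 (Bset m A M i)).+1.

Lemma good_cat M s u i : good M s i -> good M (s ++ u) i.
Proof.
case=> [h|[s0 [t [-> h]]]]; first by left; rewrite mem_cat h.
by right; exists s0, (t ++ u); rewrite catA.
Qed.

Lemma umcd_inv M N s k : umcd_from m A M N s k -> N \subset M -> all (mem M) s ->
  (forall i, i \in M -> i \notin N -> good M s i) ->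
  exists s', [/\ size s' = k, all (mem M) s' & forall i, i \in M -> good M s' i].
Proof.
elim=> {N s k} [s|N s w k wN wmin H IH] NM sM hg.
  by exists s; split => // i iM; apply: hg; rewrite ?inE.
have wM : w \in M by apply: (fintype.subsetP NM).
apply: IH.
- apply/fintype.subsetP => i; rewrite /umcd_remaining inE => /andP [/setD1P [_ iN] _].
  exact: (fintype.subsetP NM).
- by rewrite all_rcons /= wM.
- move=> i iM; rewrite /umcd_remaining inE negb_and => hi.
  case iN: (i \in N); last first.
    by rewrite -cats1; apply: good_cat; apply: hg => //; rewrite iN.
  case: (i =P w) => [->|iw]; first by left; rewrite mem_rcons mem_head.
  move: hi; rewrite inE iN andbT; case/orP.
    by rewrite negbK inE => /eqP iw'; case: iw.
  move/negPn/eqP => E; right; exists (rcons s w), [::]; rewrite cats0; split => //.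
Qed.

End Umcd.

Section Block.
Variable m : nat.
Variable A : 'I_m -> {set 'I_m}.
Variable F : finFieldType.
Variable M : {set 'I_m}.
Local Open Scope ring_scope.

Definition Pat (s : seq 'I_m) (r : 'I_(size s)) (c : 'I_m) := c \in Grow m A M s r.

Lemma widen_eq n1 n2 (h : (n1 <= n2)%N) (a b : 'I_n1) :
  (widen_ord h a == widen_ord h b) = (a == b).
Proof. by apply/eqP/eqP => [E|->] //; apply: val_inj; exact: (congr1 val E). Qed.

Lemma dec_lemma (s : seq 'I_m) (G : 'M[F]_(size s, m))
  (Goff : forall r c, ~~ Pat s r c -> G r c = 0)
  (Gon : forall r c, Pat s r c -> G r c != 0)
  (Ggen : forall S, valid (Pat s) S -> \det (minor G S) != 0)
  (i : 'I_m) : good m A M s i ->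
  forall lam, ~ (forall r, G r i = \sum_(b in Bset m A M i) lam b * G r b).
Proof.
have iB : i \notin Bset m A M i by rewrite /Bset !inE eqxx.
case=> [ini | [s0 [t [Es Hmcm]]]] lam hl.
  have ini' : (index i s < size s)%N by rewrite index_mem.
  pose r0 := Ordinal ini'.
  have ti : tnth (in_tuple s) r0 = i by rewrite (tnth_nth i) /= nth_index.
  have P0 : Pat s r0 i by rewrite /Pat /Grow ti setU11.
  have := Gon r0 i P0; rewrite hl big1 ?eqxx // => b bB; rewrite Goff ?mulr0 //.
  rewrite /Pat /Grow ti !inE; move: bB; rewrite /Bset !inE negb_or.
  by case/andP => /andP [/negbTE -> /negbTE ->].
subst s.
have hle : (size s0 <= size (s0 ++ t))%N by rewrite size_cat leq_addr.
pose f (q : 'I_(size s0) * 'I_m) := (widen_ord hle q.1, q.2).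
have finj : injective f.
  move=> [q1 q2] [q1' q2'] E; rewrite /f /= in E; case: E => E1 ->; congr (_, _); exact: val_inj E1.
have GrowE q : Grow m A M (s0 ++ t) (widen_ord hle q) = Grow m A M s0 q.
  by rewrite /Grow /= !(tnth_nth i) /= nth_cat ltn_ord.
have NS := @nospan F _ _ _ G Goff Ggen (fun r : 'I_(size (s0 ++ t)) => (nat_of_ord r < size s0)%N)
   i (Bset m A M i) (mcm m A M s0 (Bset m A M i)) iB.
apply: (NS _ _ lam hl).
  have ne0 : (0 < #|is_mcm_set m A M s0 (i |: Bset m A M i)|)%N.
    apply/card_gt0P; exists finset.set0; rewrite /is_mcm_set.
    by apply/andP; split; apply/forall_inP => p; rewrite inE.
  have [S0 vS0 eS0] := @eq_bigmax_cond _ (is_mcm_set m A M s0 (i |: Bset m A M i))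
                          (fun S => #|S|) ne0.
  exists (f @: S0); split.
  - case/andP: vS0 => /forall_inP h1 /forall_inP h2.
    apply/andP; split.
      apply/forall_inP => p /imsetP [q qS ->]; rewrite /Pat /= GrowE.
      by case/andP: (h1 q qS).
    apply/forall_inP => p /imsetP [q qS ->]; apply/forall_inP => p' /imsetP [q' qS' ->].
    apply/implyP => ne; have nq : q != q' by apply: contraNneq ne => ->.
    by move: (h2 q qS) => /forall_inP /(_ q' qS') /implyP /(_ nq); rewrite /= widen_eq.
  - by rewrite card_imset // -Hmcm /mcm eS0.
  - move=> p /imsetP [q qS ->] /=; rewrite ltn_ord /=.
    by case/andP: vS0 => /forall_inP /(_ q qS) /andP [].
move=> T vT hT.
pose T0 := [set q | f q \in T].
have TE : T = f @: T0.
  apply/setP => p; apply/idP/imsetP => [pT|[q]]; last by rewrite inE => ? ->.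
  have := hT p pT; case/andP => hp _.
  have fp : f (Ordinal hp, p.2) = p.
    by rewrite /f /= [RHS]surjective_pairing; congr (_, _); exact: val_inj.
  by exists (Ordinal hp, p.2); rewrite ?inE fp.
rewrite TE card_imset //; apply: (@leq_bigmax_cond _ (is_mcm_set m A M s0 (Bset m A M i))).
case/andP: vT => /forall_inP h1 /forall_inP h2.
apply/andP; split.
  apply/forall_inP => q; rewrite inE => qT; move: (h1 _ qT) (hT _ qT).
  by rewrite /Pat /= GrowE => -> /andP [_ ->].
apply/forall_inP => q; rewrite inE => qT; apply/forall_inP => q'; rewrite inE => qT'.
apply/implyP => nq; have ne : f q != f q' by rewrite (inj_eq finj).
by move: (h2 _ qT) => /forall_inP /(_ _ qT') /implyP /(_ ne); rewrite /= widen_eq.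
Qed.



End Block.

End P4_sec.

Section P5_sec.
Local Open Scope ring_scope.

Lemma block_code (F : finFieldType) m (A : 'I_m -> {set 'I_m}) (M : {set 'I_m}) (s : seq 'I_m) :
  all (mem M) s -> (Bound (size s) m < #|F|)%N ->
  (forall i, i \in M -> good m A M s i) ->
  exists phi : ('I_m -> F) -> 'rV[F]_(size s),
    forall i, i \in M -> forall x x', (forall j, j \in A i -> x j = x' j) ->
      phi x = phi x' -> x i = x' i.
Proof.
move=> sM hF hg.
have [a [a0 Ga]] := generic (Pat m A M s) hF.
pose G := GA (Pat m A M s) a.
have Goff r c : ~~ Pat m A M s r c -> G r c = 0 by move=> h; rewrite mxE (negbTE h).
have Gon r c : Pat m A M s r c -> G r c != 0 by move=> h; rewrite mxE h expf_neq0.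
have GM r c : Pat m A M s r c -> c \in M.
  rewrite /Pat /Grow !inE => /orP [/eqP ->|/andP [_ //]].
  by apply: (allP sM); exact: mem_tnth.
exists (fun x => \row_r \sum_c G r c * x c).
move=> i iM x x' hA' E; apply/eqP; apply: contraT => ne.
have dne : x i - x' i != 0 by rewrite subr_eq0.
exfalso; apply: (@dec_lemma m A F M s G Goff Gon Ga i (hg i iM)
          (fun b => - (x b - x' b) / (x i - x' i))) => r.
have Er : \sum_c G r c * (x c - x' c) = 0.
  have := congr1 (fun v : 'rV_(size s) => v 0 r) E; rewrite /= !mxE => E'.
  by rewrite (eq_bigr (fun c => G r c * x c - G r c * x' c)) ?sumrB ?E' ?subrr // => c _; rewrite mulrBr.
have Sp : \sum_c G r c * (x c - x' c) =
    G r i * (x i - x' i) + \sum_(b in Bset m A M i) G r b * (x b - x' b).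
  rewrite (bigD1 i) //=; congr (_ + _).
  rewrite big_mkcond [RHS]big_mkcond /=; apply: eq_bigr => c _.
  case: (c =P i) => [->|ci] /=.
    by rewrite /Bset !inE eqxx.
  case cB: (c \in Bset m A M i) => //.
  case cA: (c \in A i); first by rewrite hA' // subrr mulr0.
  case cM: (c \in M).
    by move: cB; rewrite /Bset !inE cM cA orbF; case: eqP.
  by rewrite Goff ?mul0r //; apply/negP => /GM; rewrite cM.
have H1 : G r i * (x i - x' i) = - \sum_(b in Bset m A M i) G r b * (x b - x' b).
  by apply/eqP; rewrite -addr_eq0 -Sp Er.
rewrite -(mulfK dne (G r i)) H1 mulNr mulr_suml -sumrN; apply: eq_bigr => b _.
by rewrite mulNr; ring.
Qed.

End P5_sec.

Section P6_sec.
Local Open Scope ring_scope.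

Lemma combine (F : finFieldType) (X : Type) (T : eqType) (l : seq T) (f : T -> nat)
  (Q : T -> X -> X -> Prop) :
  (forall M, M \in l -> exists phi : X -> 'rV[F]_(f M), forall x x', phi x = phi x' -> Q M x x') ->
  exists phi : X -> 'rV[F]_(\sum_(M <- l) f M),
    forall x x', phi x = phi x' -> forall M, M \in l -> Q M x x'.
Proof.
elim: l => [|M0 l IH] H.
  by exists (fun _ => 0) => x x' _ M; rewrite in_nil.
have [phi0 h0] := H M0 (mem_head _ _).
have [phiR hR] : exists phi : X -> 'rV[F]_(\sum_(M <- l) f M),
    forall x x', phi x = phi x' -> forall M, M \in l -> Q M x x'.
  by apply: IH => M Ml; apply: H; rewrite in_cons Ml orbT.
rewrite big_cons; exists (fun x => row_mx (phi0 x) (phiR x)) => x x' /eq_row_mx [E1 E2] M.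
by rewrite in_cons => /orP [/eqP ->|Ml]; [exact: h0 | exact: hR].
Qed.

Lemma code_of (F : finFieldType) m (A : 'I_m -> {set 'I_m}) r
  (phi : ('I_m -> F) -> 'rV[F]_r) :
  (forall i x x', (forall j, j \in A i -> x j = x' j) -> phi x = phi x' -> x i = x' i) ->
  has_index_code m A F 1 r.
Proof.
move=> H.
pose pr (i : 'I_m) y (side : {j : 'I_m | j \in A i} -> 'rV[F]_1) (f : {ffun 'I_m -> 'rV[F]_1}) :=
  (phi (fun j => f j 0 0) == y) && [forall j : {j : 'I_m | j \in A i}, f (val j) == side j].
exists (fun x => phi (fun j => x j 0 0)).
exists (fun i y side => if [pick f | pr i y side f] is Some f then f i else 0).
move=> x i.
have hx : pr i (phi (fun j => x j 0 0)) (fun j => x (val j)) (finfun x).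
  apply/andP; split.
    by apply/eqP; congr (phi _); apply: funext => j; rewrite ffunE.
  by apply/forallP => j; rewrite ffunE.
case: pickP => [f /andP [/eqP E /forallP Hs]|/(_ (finfun x))]; last by rewrite hx.
apply/matrixP => a b; rewrite !ord1.
apply: (H i (fun j => f j 0 0) (fun j => x j 0 0)) => // j jA.
by have := Hs (exist _ j jA); rewrite /= => /eqP ->.
Qed.

Lemma sing_part m : finset.partition (singleton_partition m) [set: 'I_m].
Proof.
apply/and3P; split.
- apply/eqP/setP => x; rewrite inE; apply/bigcupP; exists [set x]; last by rewrite inE.
  by apply/imsetP; exists x.
- apply/finset.trivIsetP => A B /imsetP [a _ ->] /imsetP [b _ ->] ne.
  rewrite disjoints1 inE; apply: contraNneq ne => ->; done.
- apply/imsetP => [[a _ E]]; have := set11 a; rewrite -E inE.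
  done.
Qed.


End P6_sec.

Theorem theorem6 (R : realType) (m : nat) (A : 'I_m -> {set 'I_m})
    (hA : forall i : 'I_m, i \notin A i)
    (exec : {set 'I_m} -> nat)
    (hexec : forall M : {set 'I_m}, umcd_run m A M (exec M)) :
  (beta m A R <= (pumcd m exec)%:R)%R.
Proof.
rewrite /pumcd /=.
case: (@arg_minnP _ (singleton_partition m) (fun P => finset.partition P [set: 'I_m]) (fun P : {set {set 'I_m}} => (\sum_(M in P) exec M)%N) (sing_part m)) => P hP _.
pose bnd := (\max_(M : {set 'I_m}) Bound (exec M) m)%N.
have [p ltp pp] := prime_above bnd.
pose F : finFieldType := 'F_p.
have cF : #|F| = p := card_Fp pp.
have hb M : (Bound (exec M) m < #|F|)%N.
  by rewrite cF; apply: leq_ltn_trans ltp; exact: (leq_bigmax M).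
pose Q (M : {set 'I_m}) (x x' : 'I_m -> F) := forall i, i \in M ->
   (forall j, j \in A i -> x j = x' j) -> x i = x' i.
have blocks : forall M, M \in enum P -> exists phi : ('I_m -> F) -> 'rV[F]_(exec M),
    forall x x', phi x = phi x' -> Q M x x'.
  move=> M _.
  have [s' [Es sM hg]] := @umcd_inv m A M M [::] (exec M) (hexec M) (subxx M) isT
     (fun i iM iN => False_ind _ (negP iN iM)).
  have hbM := hb M; rewrite -Es in hbM.
  have [phi hphi] := @block_code F m A M s' sM hbM hg.
  rewrite -Es; exists phi => x x' E i iM hA'; exact: hphi.
have [phi hphi] := @combine F _ _ (enum P) exec Q blocks.
have hc : has_index_code m A F 1 (\sum_(M <- enum P) exec M).
  apply: (@code_of F m A _ phi) => i x x' hA' E.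
  case/and3P: hP => /eqP hcov _ _.
  have : i \in finset.cover P by rewrite hcov inE.
  case/bigcupP => M MP iM.
  by apply: (hphi x x' E M) => //; rewrite mem_enum.
rewrite big_enum /= in hc.
apply: ge_inf.
  exists 0%R => y [F' [t [r [t0 _ ->]]]].
  by rewrite divr_ge0 ?ler0n.
by exists F, 1%N, (\sum_(i in P) exec i)%N; split => //; rewrite divr1.
Qed.
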